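(* Let $d\ge4$ be divisible by $4$, let $V=I$ (the $d\times d$ identity), let $h(x)=\|x\|$ (Euclidean norm) for $x\in\mathbb R^d$, and let $m=E(\|X\|)$ with $X\sim N(0,I)$. Let $i_0,i_1,\dots$ be i.i.d. uniform on $\{1,\dots,d\}$ and let $X_n$ be defined by the recursion below. Then for $n=d/4$, $$E\Big(\Big(\frac{\sum_{j=0}^{n-1}h(X_j)}{n}-m\Big)^2\Big)\ge\frac{d}{25}.$$
   Context: Let $e_i$ be the $i$-th standard basis column vector of $\mathbb R^d$. Let $(g_n)_{n\ge0}$ be i.i.d. standard Gaussian random variables independent of $(i_n)$. Define $X_0=0$ and $X_{n+1}=X_n+(g_n-e_{i_n}^TX_n)\,Ve_{i_n}$ for $n\ge0$. *)

(* Defs.v *)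
From Stdlib Require Import Reals Lra List Arith.
Import ListNotations.
Open Scope R_scope.

Definition lsum {A : Type} (f : A -> R) (l : list A) : R :=
  fold_right Rplus 0 (map f l).

(* Vectors of R^d are functions nat -> R (coordinates 0..d-1);
   d x d matrices are functions nat -> nat -> R (row, column). *)
Definition enorm (d : nat) (x : nat -> R) : R :=
  sqrt (lsum (fun k => x k ^ 2) (seq 0 d)).

Definition idmx : nat -> nat -> R := fun a b => if Nat.eqb a b then 1 else 0.

(* X_0 = 0, X_{j+1} = X_j + (g_j - e_{i_j}^T X_j) V e_{i_j}. *)
Fixpoint Xrec (V : nat -> nat -> R) (i : nat -> nat) (g : nat -> R) (j : nat)
  : nat -> R :=
  match j with
  | O => fun _ => 0
  | S j' => let x := Xrec V i g j' in
            fun k => x k + (g j' - x (i j')) * V k (i j')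
  end.

Fixpoint all_seqs (d n : nat) : list (list nat) :=
  match n with
  | O => [nil]
  | S n' => flat_map (fun a => map (cons a) (all_seqs d n')) (seq 0 d)
  end.

Definition is_RInt (f : R -> R) (a b v : R) : Prop :=
  exists pr : Riemann_integrable f a b, RiemannInt pr = v.

Definition is_RInt_R (f : R -> R) (l : R) : Prop :=
  forall eps : R, 0 < eps -> exists A : R, forall a b : R, A <= a -> A <= b ->
    exists v, is_RInt f (- a) b v /\ Rabs (v - l) < eps.

Definition gauss (x : R) : R := exp (- x ^ 2 / 2) / sqrt (2 * PI).

Definition gcons (x : R) (g : nat -> R) : nat -> R :=
  fun j => match j with O => x | S j' => g j' end.

(* gexp k F l : E[F(g_0,...,g_{k-1})] = l with g_j i.i.d. N(0,1),
   computed as an iterated improper integral against the Gaussian density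
   (the unused coordinates g_k, g_{k+1}, ... are set to 0). *)
Fixpoint gexp (k : nat) (F : (nat -> R) -> R) (l : R) : Prop :=
  match k with
  | O => F (fun _ => 0) = l
  | S k' => exists G : R -> R,
      (forall x, gexp k' (fun g => F (gcons x g)) (G x)) /\
      is_RInt_R (fun x => gauss x * G x) l
  end.

(* The random quantity ((1/n) sum_{j<n} h(X_j) - m)^2, averaged over the
   (uniform, i.i.d.) index sequences i_0..i_{n-1} in {0..d-1}; a function of g. *)
Definition sq_err_avg_idx (V : nat -> nat -> R) (d n : nat) (m : R)
  (g : nat -> R) : R :=
  / INR d ^ n *
  lsum (fun s => ((lsum (fun j => enorm d (Xrec V (fun t => nth t s O) g j))
                        (seq 0 n)) / INR n - m) ^ 2)
       (all_seqs d n).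

(* Main.v *)
Require Import Defs.
From Stdlib Require Import Reals Arith Lra Lia ZArith List FunctionalExtensionality IndefiniteDescription.
From Coquelicot Require Import Coquelicot.
Import ListNotations.
Open Scope R_scope.


Lemma exp_le a b : a <= b -> exp a <= exp b.
Proof. intro H. destruct (Rle_lt_or_eq_dec _ _ H). apply Rlt_le, exp_increasing; auto. subst; lra. Qed.


Definition fA (x t : R) : R := exp (- (x * x * (1 + t * t))) / (1 + t * t).
Definition Af (x : R) : R := RInt (fun t => fA x t) 0 1.
Definition Bf (x : R) : R := RInt (fun t => exp (- (t * t))) 0 x.

Lemma one_tt_pos t : 0 < 1 + t * t.
Proof. nra. Qed.

Lemma cont_of_der (f : R -> R) x : ex_derive f x -> continuous f x.
Proof. intro H. apply (@ex_derive_continuous R_AbsRing R_NormedModule). exact H. Qed.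

Lemma fA_der x t : is_derive (fun z => fA z t) x (-2 * x * exp (- (x * x * (1 + t * t)))).
Proof.
  unfold fA. pose proof (one_tt_pos t) as H.
  auto_derive. lra. field. lra.
Qed.

Lemma cont2_expr x t :
  continuity_2d_pt (fun u v => -2 * u * exp (- (u * u * (1 + v * v)))) x t.
Proof.
  apply continuity_2d_pt_mult.
  - apply continuity_2d_pt_mult. apply continuity_2d_pt_const. apply continuity_2d_pt_id1.
  - apply continuity_1d_2d_pt_comp with (f := exp) (g := fun u v => - (u * u * (1 + v * v))).
    + apply derivable_continuous_pt. apply derivable_pt_exp.
    + apply continuity_2d_pt_opp. apply continuity_2d_pt_mult.
      apply continuity_2d_pt_mult; apply continuity_2d_pt_id1.
      apply continuity_2d_pt_plus. apply continuity_2d_pt_const.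
      apply continuity_2d_pt_mult; apply continuity_2d_pt_id2.
Qed.

Lemma exRc (f : R -> R) a b : (forall z, continuous f z) -> ex_RInt f a b.
Proof. intro H. apply (@ex_RInt_continuous R_CompleteNormedModule). intros; apply H. Qed.

Lemma ex_RInt_fA y a b : ex_RInt (fun t => fA y t) a b.
Proof.
  apply exRc. intros z. apply cont_of_der.
  unfold fA. pose proof (one_tt_pos z). auto_derive. lra.
Qed.

Lemma Af_der x : is_derive Af x (RInt (fun t => -2 * x * exp (- (x * x * (1 + t * t)))) 0 1).
Proof.
  unfold Af.
  assert (E : RInt (fun t => -2 * x * exp (- (x * x * (1 + t * t)))) 0 1 =
              RInt (fun t => Derive (fun u => fA u t) x) 0 1).
  { apply RInt_ext. intros t _. symmetry. apply is_derive_unique. apply fA_der. }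
  rewrite E.
  apply (is_derive_RInt_param (fun u t => fA u t)).
  - apply filter_forall. intros x0 t _. eexists. apply fA_der.
  - intros t _. apply continuity_2d_pt_ext with (f := fun u v => -2 * u * exp (- (u * u * (1 + v * v)))).
    intros. symmetry. apply is_derive_unique. apply fA_der.
    apply cont2_expr.
  - apply filter_forall. intros. apply ex_RInt_fA.
Qed.

Lemma cont_gexp z : continuous (fun t => exp (- (t * t))) z.
Proof. apply cont_of_der. auto_derive. auto. Qed.

Lemma Bf_der x : is_derive Bf x (exp (- (x * x))).
Proof.
  unfold Bf. apply (is_derive_RInt (fun t => exp (- (t * t))) (fun b => RInt (fun t => exp (- (t * t))) 0 b) 0 x).
  - apply filter_forall. intros b. apply (@RInt_correct R_CompleteNormedModule). apply exRc. intros; apply cont_gexp.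
  - apply cont_gexp.
Qed.

Lemma Bf_lin x : Bf x = x * RInt (fun t => exp (- ((x * t) * (x * t)))) 0 1.
Proof.
  unfold Bf.
  pose proof (RInt_comp_lin (V := R_CompleteNormedModule) (fun t => exp (- (t * t))) x 0 0 1) as H.
  replace (x * 0 + 0) with 0 in H by ring. replace (x * 1 + 0) with x in H by ring.
  rewrite <- H by (apply exRc; intros; apply cont_gexp).
  rewrite <- (RInt_scal (V := R_CompleteNormedModule)).
  apply RInt_ext. intros. unfold scal; simpl; unfold mult; simpl. f_equal. f_equal. f_equal; ring.
  apply exRc. intros; apply cont_of_der; auto_derive; auto.
Qed.



Lemma Af_der_val x : RInt (fun t => -2 * x * exp (- (x * x * (1 + t * t)))) 0 1 = -2 * exp (- (x * x)) * Bf x.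
Proof.
  rewrite Bf_lin.
  transitivity (RInt (fun t => scal (-2 * x * exp (- (x * x))) (exp (- ((x * t) * (x * t))))) 0 1).
  - apply RInt_ext. intros. unfold scal; simpl; unfold mult; simpl.
    rewrite (Rmult_assoc (-2 * x) (exp _) (exp _)), <- exp_plus. f_equal. f_equal. ring.
  - rewrite (RInt_scal (V := R_CompleteNormedModule)). unfold scal; simpl; unfold mult; simpl. ring.
    apply exRc. intros; apply cont_of_der; auto_derive; auto.
Qed.

Definition hf x := Af x + Bf x * Bf x.

Lemma hf_der x : is_derive hf x 0.
Proof.
  unfold hf.
  pose proof (Af_der x) as HA. rewrite Af_der_val in HA.
  pose proof (Bf_der x) as HB.
  eapply is_derive_ext. intros; reflexivity.
  replace 0 with (-2 * exp (- (x * x)) * Bf x + (exp (- (x * x)) * Bf x + Bf x * exp (- (x * x)))) by ring.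
  apply (is_derive_plus (K := R_AbsRing) (V := R_NormedModule)). exact HA.
  apply (is_derive_mult (K := R_AbsRing)); auto. intros; apply Rmult_comm.
Qed.

Lemma hf_const x : hf x = hf 0.
Proof.
  destruct (MVT_gen hf 0 x (fun _ => 0)) as [c [_ Hc]].
  - intros; apply hf_der.
  - intros. apply continuity_pt_filterlim. apply cont_of_der. eexists; apply hf_der.
  - lra.
Qed.

Lemma hf0 : hf 0 = PI / 4.
Proof.
  unfold hf. unfold Bf. rewrite RInt_point. unfold zero; simpl. rewrite Rmult_0_l, Rplus_0_r.
  unfold Af.
  rewrite (RInt_ext _ (fun t => / (1 + t ^ 2))).
  - rewrite (is_RInt_unique (fun t => / (1 + t ^ 2)) 0 1 (atan 1 - atan 0)).
    rewrite atan_1, atan_0. lra.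
    apply (is_RInt_derive (V := R_CompleteNormedModule) atan).
    + intros. apply is_derive_Reals. apply derivable_pt_lim_atan.
    + intros. apply cont_of_der. pose proof (one_tt_pos x). auto_derive. simpl. lra.
  - intros. unfold fA. rewrite Rmult_0_l, Rmult_0_l, Ropp_0, exp_0. simpl. field.
    pose proof (one_tt_pos x). lra.
Qed.



Lemma RInt_cst (c a b : R) : RInt (fun _ => c) a b = (b - a) * c.
Proof. rewrite (RInt_const (V := R_CompleteNormedModule)). reflexivity. Qed.

Lemma Af_bounds x : 0 <= Af x <= exp (- (x * x)).
Proof.
  unfold Af. split.
  - apply RInt_ge_0. lra. apply ex_RInt_fA. intros. unfold fA.
    pose proof (one_tt_pos x0). pose proof (exp_pos (- (x * x * (1 + x0 * x0)))).
    apply Rlt_le. apply Rdiv_lt_0_compat; lra.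
  - replace (exp (- (x * x))) with (RInt (fun _ => exp (- (x * x))) 0 1) by (rewrite RInt_cst, Rminus_0_r, Rmult_1_l; reflexivity).
    apply RInt_le. lra. apply ex_RInt_fA. apply ex_RInt_const.
    intros t Ht. unfold fA. pose proof (one_tt_pos t).
    apply Rle_trans with (exp (- (x * x * (1 + t * t)))).
    + unfold Rdiv. rewrite <- (Rmult_1_r (exp _)) at 2. apply Rmult_le_compat_l.
      apply Rlt_le, exp_pos. rewrite <- Rinv_1. apply Rinv_le_contravar. lra. nra.
    + apply exp_le. nra.
Qed.

Lemma Bf_sq x : Bf x * Bf x = PI / 4 - Af x.
Proof. pose proof (hf_const x). rewrite hf0 in H. unfold hf in H. lra. Qed.

Lemma Bf_nonneg x : 0 <= x -> 0 <= Bf x.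
Proof.
  intro Hx. unfold Bf. apply RInt_ge_0; auto. apply exRc; intros; apply cont_gexp.
  intros; apply Rlt_le, exp_pos.
Qed.

Lemma sqrtPI_half : 1 / 2 < sqrt PI / 2.
Proof.
  pose proof PI_RGT_0. assert (1 < sqrt PI).
  { rewrite <- sqrt_1. apply sqrt_lt_1; try lra. pose proof PI_4. pose proof (PI2_3_2). lra. }
  lra.
Qed.

Lemma Bf_close x : 0 <= x -> Rabs (Bf x - sqrt PI / 2) <= 2 * exp (- (x * x)).
Proof.
  intro Hx. pose proof (Bf_sq x). pose proof (Bf_nonneg x Hx). pose proof (Af_bounds x).
  pose proof sqrtPI_half. set (c := sqrt PI / 2) in *.
  assert (Hc : c * c = PI / 4).
  { unfold c. assert (sqrt PI * sqrt PI = PI) by (apply sqrt_sqrt; pose proof PI_RGT_0; lra). nra. }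
  assert (E : Bf x - c = (Bf x * Bf x - c * c) / (Bf x + c)) by (field; lra).
  rewrite E, Rabs_div by lra. rewrite (Rabs_right (Bf x + c)) by lra.
  apply Rle_trans with (Rabs (Bf x * Bf x - c * c) / (1/2)).
  - unfold Rdiv. apply Rmult_le_compat_l. apply Rabs_pos. apply Rinv_le_contravar; lra.
  - rewrite H, Hc. replace (PI / 4 - Af x - PI / 4) with (- Af x) by ring. rewrite Rabs_Ropp, Rabs_right by lra. lra.
Qed.


Definition Cont (f : R -> R) := forall x, continuous f x.

Lemma exRI (f : R -> R) a b : Cont f -> ex_RInt f a b.
Proof. intro H. apply (@ex_RInt_continuous R_CompleteNormedModule). intros; apply H. Qed.

Lemma RI_chasles (f : R -> R) a b c : Cont f -> RInt f a b + RInt f b c = RInt f a c.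
Proof. intro H. apply (RInt_Chasles (V := R_CompleteNormedModule)); apply exRI; auto. Qed.



Lemma RI_abs_le (f g : R -> R) a b : a <= b -> Cont f -> Cont g ->
  (forall x, a <= x <= b -> Rabs (f x) <= g x) -> Rabs (RInt f a b) <= RInt g a b.
Proof.
  intros Hab Hf Hg H.
  apply Rle_trans with (RInt (fun t => Rabs (f t)) a b).
  apply abs_RInt_le; auto. apply exRI; auto.
  apply RInt_le; auto. apply (@ex_RInt_continuous R_CompleteNormedModule).
  intros z _. apply (continuous_comp f Rabs). apply Hf. apply continuous_Rabs.
  apply exRI; auto. intros; apply H; lra.
Qed.

Lemma cont_expo (K s : R) : Cont (fun x => K * exp (s * x)).
Proof. intro x. apply (@ex_derive_continuous R_AbsRing R_NormedModule). auto_derive. auto. Qed.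

Lemma RI_expo_pos K p q : p <= q -> RInt (fun x => K * exp (-1 * x)) p q = K * (exp (- p) - exp (- q)).
Proof.
  intro H. apply is_RInt_unique.
  assert (E : K * (exp (- p) - exp (- q)) = minus ((fun x => - K * exp (- x)) q) ((fun x => - K * exp (- x)) p)).
  { unfold minus, plus, opp; simpl. ring. }
  rewrite E. apply (is_RInt_derive (V := R_CompleteNormedModule) (fun x => - K * exp (- x))).
  - intros. auto_derive. auto. replace (-1 * x) with (- x) by ring. ring.
  - intros. apply cont_expo.
Qed.

Lemma RI_expo_neg K p q : p <= q -> RInt (fun x => K * exp (1 * x)) (-q) (-p) = K * (exp (- p) - exp (- q)).
Proof.
  intro H. apply is_RInt_unique.
  assert (E : K * (exp (- p) - exp (- q)) = minus ((fun x => K * exp x) (-p)) ((fun x => K * exp x) (-q))).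
  { unfold minus, plus, opp; simpl. ring. }
  rewrite E. apply (is_RInt_derive (V := R_CompleteNormedModule) (fun x => K * exp x)).
  - intros. auto_derive. auto. rewrite !Rmult_1_l. ring.
  - intros. apply cont_expo.
Qed.

Definition Decay (f : R -> R) (K : R) := forall x, Rabs (f x) <= K * exp (- Rabs x).

Lemma tail_pos f K p q : Cont f -> Decay f K -> 0 <= p -> p <= q -> Rabs (RInt f p q) <= K * exp (- p).
Proof.
  intros Hc Hd Hp Hq.
  assert (HK : 0 <= K). { pose proof (Hd 0). pose proof (Rabs_pos (f 0)). pose proof (exp_pos (- Rabs 0)). nra. }
  eapply Rle_trans. apply (RI_abs_le f (fun x => K * exp (-1 * x))); auto. apply cont_expo.
  intros x Hx. pose proof (Hd x) as Hx'. rewrite (Rabs_right x) in Hx' by lra. eapply Rle_trans. apply Hx'. right; f_equal; f_equal; ring.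
  rewrite RI_expo_pos by auto. pose proof (exp_pos (- q)). nra.
Qed.

Lemma tail_neg f K p q : Cont f -> Decay f K -> 0 <= p -> p <= q -> Rabs (RInt f (-q) (-p)) <= K * exp (- p).
Proof.
  intros Hc Hd Hp Hq.
  assert (HK : 0 <= K). { pose proof (Hd 0). pose proof (Rabs_pos (f 0)). pose proof (exp_pos (- Rabs 0)). nra. }
  eapply Rle_trans. apply (RI_abs_le f (fun x => K * exp (1 * x))); auto. lra. apply cont_expo.
  intros x Hx. eapply Rle_trans. apply Hd. rewrite Rabs_left1 by lra. right; f_equal; f_equal; ring.
  rewrite RI_expo_neg by auto. pose proof (exp_pos (- q)). nra.
Qed.

Lemma near_core f K A a b : Cont f -> Decay f K -> 0 <= A -> A <= a -> A <= b ->
  Rabs (RInt f (-a) b - RInt f (-A) A) <= 2 * K * exp (- A).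
Proof.
  intros Hc Hd HA Ha Hb.
  rewrite <- (RI_chasles f (-a) (-A) b), <- (RI_chasles f (-A) A b) by auto.
  pose proof (tail_pos f K A b Hc Hd HA Hb). pose proof (tail_neg f K A a Hc Hd HA Ha).
  replace (RInt f (- a) (- A) + (RInt f (- A) A + RInt f A b) - RInt f (- A) A) with
    (RInt f (- a) (- A) + RInt f A b) by ring.
  eapply Rle_trans. apply Rabs_triang. lra.
Qed.

Lemma exp_neg_small (eps : R) : 0 < eps -> exists N : nat, forall A, INR N <= A -> exp (- A) < eps.
Proof.
  intro He. destruct (archimed (/ eps)) as [H1 _].
  assert (Hz : (0 <= up (/ eps))%Z).
  { apply le_IZR. simpl. pose proof (Rinv_0_lt_compat _ He). lra. }
  exists (Z.to_nat (up (/ eps))). intros A HA. rewrite INR_IZR_INZ, Z2Nat.id in HA by auto.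
  assert (HA0 : 0 < A). { pose proof (Rinv_0_lt_compat _ He). lra. }
  assert (1 + A <= exp A). { destruct (Req_dec A 0). subst; lra. left; apply exp_ineq1; auto. }
  rewrite exp_Ropp. apply Rlt_le_trans with (/ A).
  apply Rinv_lt_contravar. nra. lra.
  rewrite <- (Rinv_inv eps). apply Rinv_le_contravar. apply Rinv_0_lt_compat; auto. lra.
Qed.

Lemma RI_to_Defs f a b : Cont f -> Defs.is_RInt f a b (RInt f a b).
Proof.
  intro H. exists (ex_RInt_Reals_0 _ _ _ (exRI f a b H)). rewrite <- RInt_Reals. reflexivity.
Qed.

Lemma Defs_to_RI f a b v : Defs.is_RInt f a b v -> RInt f a b = v.
Proof. intros [pr Hpr]. rewrite (RInt_Reals _ _ _ pr). auto. Qed.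

Lemma IR_intro f l : Cont f ->
  (forall eps, 0 < eps -> exists A, forall a b, A <= a -> A <= b -> Rabs (RInt f (-a) b - l) < eps) ->
  is_RInt_R f l.
Proof.
  intros Hc H eps He. destruct (H eps He) as [A HA]. exists A. intros a b Ha Hb.
  exists (RInt f (-a) b). split. apply RI_to_Defs; auto. apply HA; auto.
Qed.

Lemma IR_elim f l : is_RInt_R f l ->
  forall eps, 0 < eps -> exists A, forall a b, A <= a -> A <= b -> Rabs (RInt f (-a) b - l) < eps.
Proof.
  intros H eps He. destruct (H eps He) as [A HA]. exists A. intros a b Ha Hb.
  destruct (HA a b Ha Hb) as [v [Hv1 Hv2]]. rewrite (Defs_to_RI _ _ _ _ Hv1). auto.
Qed.

Lemma IR_exists f K : Cont f -> Decay f K -> exists l, is_RInt_R f l.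
Proof.
  intros Hc Hd.
  assert (HK : 0 <= K). { pose proof (Hd 0). pose proof (Rabs_pos (f 0)). pose proof (exp_pos (- Rabs 0)). nra. }
  set (u := fun n : nat => (RInt f (- INR n) (INR n) : R)).
  assert (Hu : forall N n, (N <= n)%nat -> Rabs (u n - u N) <= 2 * K * exp (- INR N)).
  { intros N n Hn. unfold u. apply near_core; auto. apply pos_INR. apply le_INR; auto. apply le_INR; auto. }
  assert (Hsmall : forall eps, 0 < eps -> exists N : nat, forall A, INR N <= A -> 4 * K * exp (- A) < eps).
  { intros eps He. destruct (exp_neg_small (eps / (4 * K + 1))) as [N HN].
    apply Rdiv_lt_0_compat; lra. exists N. intros A HA. specialize (HN A HA).
    apply Rle_lt_trans with ((4 * K + 1) * exp (- A)). pose proof (exp_pos (- A)). nra.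
    apply Rmult_lt_reg_l with (/ (4 * K + 1)). apply Rinv_0_lt_compat; lra.
    rewrite <- Rmult_assoc, Rinv_l, Rmult_1_l by lra. unfold Rdiv in HN. lra. }
  destruct (Rcomplete.R_complete u) as [l Hl].
  - intros eps He. destruct (Hsmall eps He) as [N HN]. exists N. intros n m Hn Hm.
    unfold R_dist. specialize (HN (INR N) (Rle_refl _)).
    pose proof (Hu N n Hn). pose proof (Hu N m Hm).
    replace (u n - u m) with ((u n - u N) - (u m - u N)) by ring.
    eapply Rle_lt_trans. apply Rabs_triang. rewrite Rabs_Ropp. lra.
  - exists l. apply IR_intro; auto. intros eps He.
    destruct (Hsmall (eps / 2)) as [N HN]. lra.
    destruct (Hl (eps / 2)) as [M HM]. lra.
    exists (INR N). intros a b Ha Hb.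
    pose proof (near_core f K (INR N) a b Hc Hd (pos_INR N) Ha Hb) as H1.
    specialize (HM (max N M) (Nat.le_max_r _ _)). unfold R_dist in HM.
    pose proof (Hu N (max N M) (Nat.le_max_l _ _)) as H2.
    specialize (HN (INR N) (Rle_refl _)).
    fold (u N) in H1.
    replace (RInt f (- a) b - l) with ((RInt f (- a) b - u N) - (u (max N M) - u N) + (u (max N M) - l)) by ring.
    eapply Rle_lt_trans. apply Rabs_triang. eapply Rle_lt_trans. apply Rplus_le_compat_r. apply Rabs_triang.
    rewrite Rabs_Ropp. pose proof (exp_pos (- INR N)). lra.
Qed.

Lemma Defs_iff f a b v : Defs.is_RInt f a b v <-> ex_RInt f a b /\ RInt f a b = v.
Proof.
  split.
  - intros [pr Hpr]. split. apply ex_RInt_Reals_1; auto. rewrite (RInt_Reals _ _ _ pr). auto.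
  - intros [H1 H2]. exists (ex_RInt_Reals_0 _ _ _ H1). rewrite <- RInt_Reals. auto.
Qed.

Lemma IR_iff f l : is_RInt_R f l <->
  forall eps, 0 < eps -> exists A, forall a b, A <= a -> A <= b -> ex_RInt f (-a) b /\ Rabs (RInt f (-a) b - l) < eps.
Proof.
  split.
  - intros H eps He. destruct (H eps He) as [A HA]. exists A. intros a b Ha Hb.
    destruct (HA a b Ha Hb) as [v [Hv1 Hv2]]. apply Defs_iff in Hv1. destruct Hv1 as [H1 H2]. rewrite H2. auto.
  - intros H eps He. destruct (H eps He) as [A HA]. exists A. intros a b Ha Hb.
    destruct (HA a b Ha Hb) as [H1 H2]. exists (RInt f (-a) b). split; auto. apply Defs_iff; auto.
Qed.

Lemma IR_ext f g l : (forall x, f x = g x) -> is_RInt_R f l -> is_RInt_R g l.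
Proof.
  intros E H. assert (f = g) by (apply functional_extensionality; auto). subst; auto.
Qed.

Lemma IR_lin f g l l' c : is_RInt_R f l -> is_RInt_R g l' -> is_RInt_R (fun x => f x + c * g x) (l + c * l').
Proof.
  intros Hf Hg. rewrite IR_iff in *. intros eps He.
  destruct (Hf (eps / 2)) as [A1 H1]. lra.
  destruct (Hg (eps / (2 * (Rabs c + 1)))) as [A2 H2]. apply Rdiv_lt_0_compat. lra. pose proof (Rabs_pos c). lra.
  exists (Rmax A1 A2). intros a b Ha Hb.
  destruct (H1 a b) as [E1 B1]. eapply Rle_trans. apply Rmax_l. eauto. eapply Rle_trans. apply Rmax_l. eauto.
  destruct (H2 a b) as [E2 B2]. eapply Rle_trans. apply Rmax_r. eauto. eapply Rle_trans. apply Rmax_r. eauto.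
  assert (Ex : ex_RInt (fun x => f x + c * g x) (-a) b).
  { apply (ex_RInt_plus (V := R_NormedModule) f (fun x => c * g x)); auto.
    apply (ex_RInt_scal (V := R_NormedModule) g); auto. }
  split; auto.
  assert (Ev : RInt (fun x => f x + c * g x) (-a) b = RInt f (-a) b + c * RInt g (-a) b).
  { rewrite (RInt_plus (V := R_CompleteNormedModule) f (fun x => c * g x)); auto.
    rewrite (RInt_scal (V := R_CompleteNormedModule) g); auto.
    apply (ex_RInt_scal (V := R_NormedModule) g); auto. }
  rewrite Ev.
  replace (RInt f (- a) b + c * RInt g (- a) b - (l + c * l')) with
    ((RInt f (- a) b - l) + c * (RInt g (- a) b - l')) by ring.
  eapply Rle_lt_trans. apply Rabs_triang. rewrite Rabs_mult.
  assert (Rabs c * Rabs (RInt g (- a) b - l') <= (Rabs c + 1) * (eps / (2 * (Rabs c + 1)))).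
  { pose proof (Rabs_pos c). pose proof (Rabs_pos (RInt g (- a) b - l')). nra. }
  replace ((Rabs c + 1) * (eps / (2 * (Rabs c + 1)))) with (eps / 2) in H by (field; pose proof (Rabs_pos c); lra).
  lra.
Qed.

Lemma IR_mono f g l l' : (forall x, f x <= g x) -> is_RInt_R f l -> is_RInt_R g l' -> l <= l'.
Proof.
  intros Hfg Hf Hg. rewrite IR_iff in *. destruct (Rle_or_lt l l') as [H|H]; auto. exfalso.
  destruct (Hf ((l - l') / 2)) as [A1 H1]. lra.
  destruct (Hg ((l - l') / 2)) as [A2 H2]. lra.
  set (a := Rmax 0 (Rmax A1 A2)).
  assert (HA1 : A1 <= a). { unfold a. eapply Rle_trans. apply (Rmax_l A1 A2). apply Rmax_r. }
  assert (HA2 : A2 <= a). { unfold a. eapply Rle_trans. apply (Rmax_r A1 A2). apply Rmax_r. }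
  assert (H0 : 0 <= a) by apply Rmax_l.
  destruct (H1 a a HA1 HA1) as [E1 B1]. destruct (H2 a a HA2 HA2) as [E2 B2].
  assert (RInt f (-a) a <= RInt g (-a) a). { apply RInt_le; auto. lra. }
  apply Rabs_def2 in B1. apply Rabs_def2 in B2. lra.
Qed.

Lemma IR_unique f l l' : is_RInt_R f l -> is_RInt_R f l' -> l = l'.
Proof. intros. apply Rle_antisym; eapply IR_mono; eauto; intros; lra. Qed.


Lemma gauss_eq x : gauss x = exp (- (x * x / 2)) / sqrt (2 * PI).
Proof. unfold gauss. f_equal. f_equal. simpl. field. Qed.

Lemma cont_gauss : Cont gauss.
Proof.
  intro x. apply (@ex_derive_continuous R_AbsRing R_NormedModule). unfold gauss. auto_derive.
  exact I.
Qed.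

Lemma sqrt2PI_pos : 0 < sqrt (2 * PI).
Proof. pose proof PI_RGT_0. apply sqrt_lt_R0; lra. Qed.

Lemma gauss_pos x : 0 < gauss x.
Proof. unfold gauss. apply Rdiv_lt_0_compat. apply exp_pos. apply sqrt2PI_pos. Qed.

Definition phi (y : R) : R := exp (- (y * y / 2)).

Lemma cont_phi : Cont phi.
Proof. intro x. apply (@ex_derive_continuous R_AbsRing R_NormedModule). unfold phi. auto_derive. auto. Qed.

Lemma RInt_phi_pos b : RInt phi 0 b = sqrt 2 * Bf (b / sqrt 2).
Proof.
  assert (H2 : 0 < sqrt 2) by (apply sqrt_lt_R0; lra).
  assert (Hs : sqrt 2 * sqrt 2 = 2) by (apply sqrt_sqrt; lra).
  unfold Bf.
  pose proof (RInt_comp_lin (V := R_CompleteNormedModule) (fun t => exp (- (t * t))) (/ sqrt 2) 0 0 b) as H.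
  replace (/ sqrt 2 * 0 + 0) with 0 in H by ring. replace (/ sqrt 2 * b + 0) with (b / sqrt 2) in H by (unfold Rdiv; ring).
  rewrite <- H by (apply exRc; intros; apply cont_gexp).
  rewrite <- (RInt_scal (V := R_CompleteNormedModule)).
  apply RInt_ext. intros. unfold scal; simpl; unfold mult; simpl. unfold phi. field_simplify. 2: lra.
  replace ((/ sqrt 2 * x + 0) * (/ sqrt 2 * x + 0)) with (x * x / (sqrt 2 * sqrt 2)) by (field; lra). rewrite Hs. reflexivity.
  apply (ex_RInt_scal (V := R_NormedModule)). apply exRc. intros; apply cont_of_der; auto_derive; auto.
Qed.

Lemma RInt_swap' (f : R -> R) a b : Cont f -> RInt f b a = - RInt f a b.
Proof. intro H. pose proof (RI_chasles f a b a H). rewrite RInt_point in H0. unfold zero in H0; simpl in H0. lra. Qed.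

Lemma RInt_phi_neg a : RInt phi (-a) 0 = RInt phi 0 a.
Proof.
  pose proof (RInt_comp_lin (V := R_CompleteNormedModule) phi (-1) 0 (-a) 0) as H.
  replace (-1 * - a + 0) with a in H by ring. replace (-1 * 0 + 0) with 0 in H by ring.
  rewrite (RInt_swap' phi a 0) by apply cont_phi. rewrite <- H by (apply exRI; apply cont_phi).
  match goal with |- _ = - ?t => assert (Hg : t = - RInt phi (-a) 0) end.
  { rewrite (RInt_ext _ (fun y => opp (phi y))).
    rewrite (RInt_opp (V := R_CompleteNormedModule) phi). reflexivity. apply exRI, cont_phi.
    intros. unfold scal, opp; simpl; unfold mult; simpl. unfold phi.
    replace ((-1 * x + 0) * (-1 * x + 0)) with (x * x) by ring. ring. }
  rewrite Hg. simpl. lra.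
Qed.

Lemma RInt_gauss a b : RInt gauss (-a) b = (Bf (a / sqrt 2) + Bf (b / sqrt 2)) / sqrt PI.
Proof.
  assert (E : forall x, gauss x = / sqrt (2 * PI) * phi x).
  { intro x. rewrite gauss_eq. unfold phi. unfold Rdiv. ring. }
  rewrite (RInt_ext gauss (fun x => scal (/ sqrt (2 * PI)) (phi x))).
  2: { intros. rewrite E. reflexivity. }
  rewrite (RInt_scal (V := R_CompleteNormedModule)) by (apply exRI, cont_phi).
  rewrite <- (RI_chasles phi (-a) 0 b) by apply cont_phi.
  rewrite RInt_phi_neg, !RInt_phi_pos. unfold scal; simpl; unfold mult; simpl.
  rewrite sqrt_mult by (pose proof PI_RGT_0; lra).
  assert (0 < sqrt 2) by (apply sqrt_lt_R0; lra).
  assert (0 < sqrt PI) by (apply sqrt_lt_R0; apply PI_RGT_0).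
  field. lra.
Qed.

Lemma gauss_close a b : 0 <= a -> 0 <= b ->
  Rabs (RInt gauss (-a) b - 1) <= 2 * exp (- (a * a / 2)) + 2 * exp (- (b * b / 2)).
Proof.
  intros Ha Hb. rewrite RInt_gauss.
  assert (H2 : 0 < sqrt 2) by (apply sqrt_lt_R0; lra).
  assert (Hs : sqrt 2 * sqrt 2 = 2) by (apply sqrt_sqrt; lra).
  assert (HP : 1 < sqrt PI) by (pose proof sqrtPI_half; lra).
  pose proof (Bf_close (a / sqrt 2)) as Ca. pose proof (Bf_close (b / sqrt 2)) as Cb.
  assert (Ea : a / sqrt 2 * (a / sqrt 2) = a * a / 2) by (replace (a / sqrt 2 * (a / sqrt 2)) with (a * a / (sqrt 2 * sqrt 2)) by (field; lra); rewrite Hs; reflexivity).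
  assert (Eb : b / sqrt 2 * (b / sqrt 2) = b * b / 2) by (replace (b / sqrt 2 * (b / sqrt 2)) with (b * b / (sqrt 2 * sqrt 2)) by (field; lra); rewrite Hs; reflexivity).
  rewrite Ea in Ca. rewrite Eb in Cb.
  assert (0 <= a / sqrt 2) by (apply Rdiv_le_0_compat; lra).
  assert (0 <= b / sqrt 2) by (apply Rdiv_le_0_compat; lra).
  specialize (Ca H). specialize (Cb H0).
  replace ((Bf (a / sqrt 2) + Bf (b / sqrt 2)) / sqrt PI - 1) with
    (((Bf (a / sqrt 2) - sqrt PI / 2) + (Bf (b / sqrt 2) - sqrt PI / 2)) / sqrt PI) by (field; lra).
  rewrite Rabs_div by lra. rewrite (Rabs_right (sqrt PI)) by lra.
  apply Rle_trans with (Rabs ((Bf (a / sqrt 2) - sqrt PI / 2) + (Bf (b / sqrt 2) - sqrt PI / 2))).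
  - unfold Rdiv. rewrite <- (Rmult_1_r (Rabs _)) at 2. apply Rmult_le_compat_l. apply Rabs_pos.
    rewrite <- Rinv_1. apply Rinv_le_contravar; lra.
  - eapply Rle_trans. apply Rabs_triang. lra.
Qed.

Lemma le_exp_self x : x <= exp x.
Proof. destruct (Req_dec x 0). subst. rewrite exp_0. lra. pose proof (exp_ineq1 x H). lra. Qed.

Lemma pow_le_exp (b : R) (k : nat) : 0 <= b -> b ^ k <= exp (INR k * b).
Proof.
  intro Hb. induction k.
  - simpl. rewrite Rmult_0_l, exp_0. lra.
  - rewrite S_INR. replace ((INR k + 1) * b) with (INR k * b + b) by ring. rewrite exp_plus.
    simpl. rewrite Rmult_comm. apply Rmult_le_compat; auto. apply pow_le; auto. apply le_exp_self.
Qed.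

Lemma poly_small (k : nat) (eps : R) : 0 < eps ->
  exists A, 0 <= A /\ forall b, A <= b -> b ^ k * exp (- (b * b / 2)) < eps.
Proof.
  intro He. destruct (exp_neg_small eps He) as [N HN].
  exists (Rmax (2 * INR k + 2) (INR N)). split.
  { eapply Rle_trans. 2: apply Rmax_l. pose proof (pos_INR k). lra. }
  intros b Hb. pose proof (Rmax_l (2 * INR k + 2) (INR N)). pose proof (Rmax_r (2 * INR k + 2) (INR N)).
  pose proof (pos_INR k).
  apply Rle_lt_trans with (exp (- b)).
  - eapply Rle_trans. apply Rmult_le_compat_r. apply Rlt_le, exp_pos. apply pow_le_exp. lra.
    rewrite <- exp_plus. apply exp_le. nra.
  - apply HN. lra.
Qed.

Lemma gauss_le x : gauss x <= exp (- (x * x / 2)).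
Proof.
  rewrite gauss_eq. unfold Rdiv. rewrite <- (Rmult_1_r (exp _)) at 2. apply Rmult_le_compat_l.
  apply Rlt_le, exp_pos. rewrite <- Rinv_1. apply Rinv_le_contravar. lra.
  rewrite <- sqrt_1. apply sqrt_le_1_alt. pose proof PI_RGT_0. pose proof PI_4. pose proof PI2_3_2. lra.
Qed.

Lemma gauss_even x : gauss (- x) = gauss x.
Proof. unfold gauss. f_equal. f_equal. f_equal. f_equal. ring. Qed.

Lemma IR_gauss0 : is_RInt_R gauss 1.
Proof.
  apply IR_iff. intros eps He.
  destruct (poly_small 0 (eps / 5)) as [A [HA0 HA]]. lra.
  exists A. intros a b Ha Hb. split. apply exRI, cont_gauss.
  pose proof (gauss_close a b). specialize (HA a Ha) as H1. specialize (HA b Hb) as H2.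
  simpl in H1, H2. lra.
Qed.

Lemma RInt_split (f g : R -> R) a b : Cont f -> Cont g ->
  RInt f a b = RInt g a b + RInt (fun x => f x - g x) a b.
Proof.
  intros Hf Hg.
  assert (Cd : Cont (fun x => f x - g x)).
  { intro x. apply (continuous_minus (V := R_NormedModule) f g); auto. }
  rewrite <- (RInt_plus (V := R_CompleteNormedModule) g (fun x => f x - g x)) by (apply exRI; auto).
  apply RInt_ext. intros. unfold plus; simpl. ring.
Qed.

Lemma cont_gpoly (k : nat) : Cont (fun x => gauss x * x ^ k).
Proof.
  intro x. apply (continuous_mult (K := R_AbsRing) gauss (fun x => x ^ k)). apply cont_gauss.
  apply (@ex_derive_continuous R_AbsRing R_NormedModule). auto_derive. auto.
Qed.

Lemma gauss_der x : is_derive gauss x (- x * gauss x).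
Proof.
  unfold gauss. pose proof sqrt2PI_pos. auto_derive. lra. replace (- (x * (x * 1)) * / 2) with (- x ^ 2 / 2) by (simpl; field). field. lra.
Qed.

Lemma IR_gauss2 : is_RInt_R (fun x => gauss x * x ^ 2) 1.
Proof.
  apply IR_iff. intros eps He.
  destruct (poly_small 1 (eps / 8)) as [A [HA0 HA]]. lra.
  destruct (poly_small 0 (eps / 8)) as [B [HB0 HB]]. lra.
  exists (Rmax A B). intros a b Ha Hb. split. apply exRI, cont_gpoly.
  pose proof (Rmax_l A B). pose proof (Rmax_r A B).
  rewrite (RInt_split _ gauss) by (apply cont_gpoly || apply cont_gauss).
  assert (E : RInt (fun x => gauss x * x ^ 2 - gauss x) (-a) b = (- b * gauss b) - (- (- a) * gauss (- a))).
  { apply is_RInt_unique.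
    apply (is_RInt_derive (V := R_CompleteNormedModule) (fun x => - x * gauss x)).
    - intros. eapply is_derive_ext. intros; reflexivity.
      replace (gauss x * x ^ 2 - gauss x) with (-1 * gauss x + - x * (- x * gauss x)) by ring.
      apply (is_derive_mult (K := R_AbsRing) (fun x => - x) gauss).
      auto_derive; auto. apply gauss_der. intros; apply Rmult_comm.
    - intros. intro y. apply (continuous_minus (V := R_NormedModule) (fun x => gauss x * x ^ 2) gauss).
      apply cont_gpoly. apply cont_gauss. }
  rewrite E. rewrite gauss_even.
  pose proof (gauss_close a b). pose proof (HA a (Rle_trans _ _ _ H Ha)). pose proof (HA b (Rle_trans _ _ _ H Hb)).
  pose proof (HB a (Rle_trans _ _ _ H0 Ha)). pose proof (HB b (Rle_trans _ _ _ H0 Hb)).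
  pose proof (gauss_le a). pose proof (gauss_le b). pose proof (gauss_pos a). pose proof (gauss_pos b).
  simpl in *. rewrite Rmult_1_r in *.
  assert (a * gauss a <= a * exp (- (a * a / 2))) by (apply Rmult_le_compat_l; lra).
  assert (b * gauss b <= b * exp (- (b * b / 2))) by (apply Rmult_le_compat_l; lra).
  assert (0 <= a * gauss a) by nra. assert (0 <= b * gauss b) by nra.
  assert (EI : forall I : R, I + (- b * gauss b - - - a * gauss a) - 1 = (I - 1) + (- (b * gauss b)) + - (a * gauss a)) by (intros; ring). rewrite EI.
  eapply Rle_lt_trans. apply Rabs_triang. eapply Rle_lt_trans. apply Rplus_le_compat_r. apply Rabs_triang.
  rewrite !Rabs_Ropp. rewrite (Rabs_right (b * gauss b)) by lra. rewrite (Rabs_right (a * gauss a)) by lra. lra.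
Qed.

Lemma IR_gauss4 : is_RInt_R (fun x => gauss x * x ^ 4) 3.
Proof.
  apply IR_iff. intros eps He.
  destruct (poly_small 3 (eps / 20)) as [A [HA0 HA]]. lra.
  destruct (poly_small 1 (eps / 20)) as [A1 [HA10 HA1]]. lra.
  destruct (poly_small 0 (eps / 20)) as [B [HB0 HB]]. lra.
  exists (Rmax (Rmax A A1) B). intros a b Ha Hb. split. apply exRI, cont_gpoly.
  pose proof (Rmax_l (Rmax A A1) B). pose proof (Rmax_r (Rmax A A1) B).
  pose proof (Rmax_l A A1). pose proof (Rmax_r A A1).
  assert (C3 : Cont (fun x => 3 * gauss x)).
  { intro x. apply (continuous_scal_r (K := R_AbsRing) (V := R_NormedModule) 3 gauss). apply cont_gauss. }
  rewrite (RInt_split _ (fun x => 3 * gauss x)) by (apply cont_gpoly || apply C3).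
  assert (E3 : RInt (fun x => 3 * gauss x) (-a) b = 3 * RInt gauss (-a) b).
  { apply (RInt_scal (V := R_CompleteNormedModule) gauss). apply exRI, cont_gauss. }
  assert (E : RInt (fun x => gauss x * x ^ 4 - 3 * gauss x) (-a) b =
     (- (b ^ 3 + 3 * b) * gauss b) - (- ((- a) ^ 3 + 3 * (- a)) * gauss (- a))).
  { apply is_RInt_unique.
    apply (is_RInt_derive (V := R_CompleteNormedModule) (fun x => - (x ^ 3 + 3 * x) * gauss x)).
    - intros. eapply is_derive_ext. intros; reflexivity.
      replace (gauss x * x ^ 4 - 3 * gauss x) with
        (- (3 * x ^ 2 + 3) * gauss x + - (x ^ 3 + 3 * x) * (- x * gauss x)) by ring.
      apply (is_derive_mult (K := R_AbsRing) (fun x => - (x ^ 3 + 3 * x)) gauss).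
      auto_derive; auto. simpl. ring. apply gauss_der. intros; apply Rmult_comm.
    - intros. intro y. apply (continuous_minus (V := R_NormedModule) (fun x => gauss x * x ^ 4) (fun x => 3 * gauss x)).
      apply cont_gpoly. apply C3. }
  rewrite E, E3. rewrite gauss_even.
  pose proof (gauss_close a b) as GC.
  assert (Ha3 : a ^ 3 * exp (- (a * a / 2)) < eps / 20) by (apply HA; lra).
  assert (Hb3 : b ^ 3 * exp (- (b * b / 2)) < eps / 20) by (apply HA; lra).
  assert (Ha1 : a ^ 1 * exp (- (a * a / 2)) < eps / 20) by (apply HA1; lra).
  assert (Hb1 : b ^ 1 * exp (- (b * b / 2)) < eps / 20) by (apply HA1; lra).
  assert (Ha0 : a ^ 0 * exp (- (a * a / 2)) < eps / 20) by (apply HB; lra).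
  assert (Hb0 : b ^ 0 * exp (- (b * b / 2)) < eps / 20) by (apply HB; lra).
  assert (a0 : 0 <= a) by lra. assert (b0 : 0 <= b) by lra.
  specialize (GC a0 b0).
  pose proof (gauss_le a). pose proof (gauss_le b). pose proof (gauss_pos a). pose proof (gauss_pos b).
  simpl in *. rewrite Rmult_1_r in *.
  assert (Pa : 0 <= (a * (a * a) + 3 * a) * gauss a <= (a * (a * a) + 3 * a) * exp (- (a * a / 2))).
  { split. apply Rmult_le_pos; nra. apply Rmult_le_compat_l; nra. }
  assert (Pb : 0 <= (b * (b * b) + 3 * b) * gauss b <= (b * (b * b) + 3 * b) * exp (- (b * b / 2))).
  { split. apply Rmult_le_pos; nra. apply Rmult_le_compat_l; nra. }
  assert (EI : forall I : R, 3 * I + (- (b * (b * b) + 3 * b) * gauss b - - (- a * (- a * - a) + 3 * - a) * gauss a) - 3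
     = 3 * (I - 1) + - ((b * (b * b) + 3 * b) * gauss b) + - ((a * (a * a) + 3 * a) * gauss a)) by (intros; ring).
  repeat rewrite Rmult_1_r. rewrite EI.
  eapply Rle_lt_trans. apply Rabs_triang. eapply Rle_lt_trans. apply Rplus_le_compat_r. apply Rabs_triang.
  rewrite !Rabs_Ropp, Rabs_mult. rewrite (Rabs_right 3) by lra.
  rewrite (Rabs_right ((b * (b * b) + 3 * b) * gauss b)) by lra.
  rewrite (Rabs_right ((a * (a * a) + 3 * a) * gauss a)) by lra.
  nra.
Qed.


Lemma gexp_ext k F F' l : (forall g, F g = F' g) -> gexp k F l -> gexp k F' l.
Proof. intros E H. assert (F = F') by (apply functional_extensionality; auto). subst; auto. Qed.

Lemma gexp_lin k : forall F F' l l' c, gexp k F l -> gexp k F' l' ->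
  gexp k (fun g => F g + c * F' g) (l + c * l').
Proof.
  induction k; intros F F' l l' c H H'; simpl in *.
  - subst; reflexivity.
  - destruct H as [G [HG HI]]. destruct H' as [G' [HG' HI']].
    exists (fun x => G x + c * G' x). split.
    + intro x. apply (IHk (fun g => F (gcons x g)) (fun g => F' (gcons x g))); auto.
    + eapply IR_ext. 2: apply (IR_lin _ _ _ _ c HI HI'). intro x. simpl. ring.
Qed.

Lemma gexp_mono k : forall F F' l l', (forall g, F g <= F' g) -> gexp k F l -> gexp k F' l' -> l <= l'.
Proof.
  induction k; intros F F' l l' Hle H H'; simpl in *.
  - subst; auto.
  - destruct H as [G [HG HI]]. destruct H' as [G' [HG' HI']].
    eapply IR_mono. 2: apply HI. 2: apply HI'. intro x. simpl.
    apply Rmult_le_compat_l. apply Rlt_le, gauss_pos.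
    eapply IHk. 2: apply HG. 2: apply HG'. intros; apply Hle.
Qed.

Lemma IR_gauss_c c : is_RInt_R (fun x => gauss x * c) c.
Proof.
  pose proof (IR_lin _ _ _ _ (c - 1) IR_gauss0 IR_gauss0) as H.
  replace (1 + (c - 1) * 1) with c in H by ring.
  eapply IR_ext. 2: exact H. intro x; simpl; ring.
Qed.

Lemma gexp_const k : forall c, gexp k (fun _ => c) c.
Proof.
  induction k; intro c; simpl. reflexivity.
  exists (fun _ => c). split. intro; apply IHk. apply IR_gauss_c.
Qed.

Lemma gexp_scal k F l c : gexp k F l -> gexp k (fun g => c * F g) (c * l).
Proof.
  intro H. pose proof (gexp_lin k (fun _ => 0) F 0 l c (gexp_const k 0) H).
  eapply gexp_ext. 2: replace (c * l) with (0 + c * l) by ring; exact H0. intro; simpl; ring.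
Qed.

Lemma gexp_plus k F F' l l' : gexp k F l -> gexp k F' l' -> gexp k (fun g => F g + F' g) (l + l').
Proof.
  intros H H'. pose proof (gexp_lin k F F' l l' 1 H H').
  eapply gexp_ext. 2: replace (l + l') with (l + 1 * l') by ring; exact H0. intro; simpl; ring.
Qed.

Lemma gexp_abs_bound k F W l w M : gexp k F l -> gexp k W w ->
  (forall g, Rabs (F g) <= M * W g) -> Rabs l <= M * w.
Proof.
  intros HF HW Hb. apply Rabs_le. split.
  - assert (H1 := gexp_scal k W w (- M) HW).
    replace (- (M * w)) with (- M * w) by ring.
    eapply gexp_mono. 2: apply H1. 2: apply HF. intro g. specialize (Hb g). apply Rabs_le_between in Hb. lra.
  - eapply gexp_mono. 3: apply (gexp_scal k W w M HW). 2: apply HF. intro g. specialize (Hb g). apply Rabs_le_between in Hb. lra.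
Qed.

Lemma decay_gauss_exp (G : R -> R) C c : 0 <= c ->
  (forall x, Rabs (G x) <= C * exp (c * Rabs x)) ->
  Decay (fun x => gauss x * G x) (C * exp ((c + 1) * (c + 1) / 2)).
Proof.
  intros Hc HG x. rewrite Rabs_mult. rewrite (Rabs_right (gauss x)) by (apply Rle_ge, Rlt_le, gauss_pos).
  pose proof (HG x) as H. pose proof (gauss_le x). pose proof (gauss_pos x).
  assert (HC : 0 <= C * exp (c * Rabs x)) by (pose proof (Rabs_pos (G x)); lra).
  eapply Rle_trans. apply Rmult_le_compat. lra. apply Rabs_pos. apply H0. apply H.
  replace (exp (- (x * x / 2)) * (C * exp (c * Rabs x))) with (C * (exp (- (x * x / 2)) * exp (c * Rabs x))) by ring.
  rewrite <- exp_plus. rewrite Rmult_assoc, <- exp_plus.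
  assert (0 <= C). { pose proof (exp_pos (c * Rabs x)). destruct (Rle_or_lt 0 C); auto. nra. }
  apply Rmult_le_compat_l; auto. apply exp_le.
  assert (x * x = Rabs x * Rabs x) by (unfold Rabs; destruct (Rcase_abs x); ring).
  rewrite H3. pose proof (Rabs_pos x). pose proof (Rle_0_sqr (Rabs x - (c + 1))). unfold Rsqr in *. nra.
Qed.

Lemma cont_exp_abs c : Cont (fun x => exp (c * Rabs x)).
Proof.
  intro x. apply (continuous_comp (fun x => c * Rabs x) exp).
  apply (continuous_scal_r (K := R_AbsRing) (V := R_NormedModule) c Rabs). apply continuous_Rabs.
  apply continuous_exp.
Qed.

Lemma cont_mul (f g : R -> R) : Cont f -> Cont g -> Cont (fun x => f x * g x).
Proof. intros Hf Hg x. apply (continuous_mult (K := R_AbsRing) f g); auto. Qed.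

Lemma IR_exists_gauss (G : R -> R) C c : 0 <= c -> Cont G ->
  (forall x, Rabs (G x) <= C * exp (c * Rabs x)) -> exists l, is_RInt_R (fun x => gauss x * G x) l.
Proof.
  intros Hc HG Hb. eapply IR_exists. apply cont_mul. apply cont_gauss. auto.
  apply decay_gauss_exp; eauto.
Qed.

Lemma exp_abs_bound c x : Rabs (exp (c * Rabs x)) <= 1 * exp (c * Rabs x).
Proof. rewrite Rmult_1_l, Rabs_right. apply Rle_refl. apply Rle_ge, Rlt_le, exp_pos. Qed.

Definition rho (a : R) : R :=
  proj1_sig (constructive_indefinite_description _
    (IR_exists_gauss (fun x => exp (Rabs a * Rabs x)) 1 (Rabs a) (Rabs_pos a) (cont_exp_abs (Rabs a))
       (exp_abs_bound (Rabs a)))).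

Lemma rho_spec a : is_RInt_R (fun x => gauss x * exp (Rabs a * Rabs x)) (rho a).
Proof. unfold rho. destruct constructive_indefinite_description. simpl. auto. Qed.

Lemma IR_scal f l c : is_RInt_R f l -> is_RInt_R (fun x => c * f x) (c * l).
Proof.
  intro H. pose proof (IR_lin _ _ _ _ (c - 1) H H) as H'.
  replace (l + (c - 1) * l) with (c * l) in H' by ring. eapply IR_ext. 2: exact H'. intro; simpl; ring.
Qed.

Lemma IR_val f l l' : l = l' -> is_RInt_R f l -> is_RInt_R f l'.
Proof. intros; subst; auto. Qed.

Lemma gexp_val k F l l' : l = l' -> gexp k F l -> gexp k F l'.
Proof. intros; subst; auto. Qed.

Fixpoint ssum (k : nat) (f : nat -> R) : R :=
  match k with O => 0 | S k' => f O + ssum k' (fun j => f (S j)) end.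

Definition Sk (k : nat) (g : nat -> R) : R := ssum k (fun j => Rabs (g j)).
Definition Dk (k : nat) (g g' : nat -> R) : R := ssum k (fun j => Rabs (g j - g' j)).

Lemma ssum_nonneg k : forall f, (forall j, 0 <= f j) -> 0 <= ssum k f.
Proof. induction k; intros f H; simpl. lra. pose proof (H O). pose proof (IHk (fun j => f (S j)) (fun j => H (S j))). lra. Qed.

Lemma ssum_ext k : forall f f', (forall j, (j < k)%nat -> f j = f' j) -> ssum k f = ssum k f'.
Proof.
  induction k; intros f f' H; simpl. auto. rewrite (H O) by lia. f_equal. apply IHk. intros; apply H; lia.
Qed.

Lemma ssum_zero k : ssum k (fun _ => 0) = 0.
Proof. induction k; simpl. auto. rewrite IHk. ring. Qed.

Lemma ssum_last k : forall f, ssum (S k) f = ssum k f + f k.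
Proof.
  induction k; intros f. simpl. ring. 
  change (ssum (S (S k)) f) with (f O + ssum (S k) (fun j => f (S j))). rewrite IHk. simpl. ring.
Qed.

Lemma ssum_mono_k k k' f : (k <= k')%nat -> (forall j, 0 <= f j) -> ssum k f <= ssum k' f.
Proof.
  intros Hk Hf. induction Hk. lra. rewrite ssum_last. pose proof (Hf m). lra.
Qed.

Lemma ssum_le k : forall f f', (forall j, f j <= f' j) -> ssum k f <= ssum k f'.
Proof. induction k; intros f f' H; simpl. lra. pose proof (H O). pose proof (IHk (fun j => f (S j)) (fun j => f' (S j)) (fun j => H (S j))). lra. Qed.

Lemma ssum_plus k : forall f f', ssum k (fun j => f j + f' j) = ssum k f + ssum k f'.
Proof. induction k; intros f f'; simpl. ring. rewrite IHk. ring. Qed.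

Lemma Sk_nonneg k g : 0 <= Sk k g.
Proof. apply ssum_nonneg. intros; apply Rabs_pos. Qed.

Lemma Dk_nonneg k g g' : 0 <= Dk k g g'.
Proof. apply ssum_nonneg. intros; apply Rabs_pos. Qed.

Lemma gexp_W k a : 0 <= a -> gexp k (fun g => exp (a * Sk k g)) (rho a ^ k).
Proof.
  intro Ha. induction k.
  - simpl. unfold Sk; simpl. rewrite Rmult_0_r, exp_0. reflexivity.
  - simpl. exists (fun x => exp (a * Rabs x) * rho a ^ k). split.
    + intro x. eapply gexp_ext. 2: apply (gexp_scal _ _ _ (exp (a * Rabs x)) IHk).
      intro g. unfold Sk; simpl. rewrite <- exp_plus. f_equal. ring.
    + pose proof (IR_scal _ _ (rho a ^ k) (rho_spec a)) as H. rewrite (Rabs_right a) in H by lra.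
      eapply IR_ext. 2: eapply IR_val. 3: exact H. intro x; simpl; ring. ring.
Qed.

Lemma rho_pos a : 0 < rho a.
Proof.
  (* rho a >= rho 0-like lower bound: gauss * exp >= gauss, integral >= 1 *)
  pose proof (IR_mono (fun x => gauss x) (fun x => gauss x * exp (Rabs a * Rabs x)) 1 (rho a)) as H.
  assert (1 <= rho a). { apply H. intro x. rewrite <- (Rmult_1_r (gauss x)) at 1. apply Rmult_le_compat_l.
    apply Rlt_le, gauss_pos. rewrite <- exp_0. apply exp_le. pose proof (Rabs_pos a); pose proof (Rabs_pos x); nra.
    apply IR_gauss0. apply rho_spec. }
  lra.
Qed.

Definition Nice (k : nat) (F : (nat -> R) -> R) : Prop :=
  exists C c, 0 <= C /\ 0 <= c /\ forall g g',
    Rabs (F g) <= C * exp (c * Sk k g) /\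
    Rabs (F g - F g') <= C * exp (c * (Sk k g + Sk k g')) * sqrt (Dk k g g').

Lemma Sk_cons k x g : Sk (S k) (gcons x g) = Rabs x + Sk k g.
Proof. reflexivity. Qed.

Lemma Dk_cons k x y g g' : Dk (S k) (gcons x g) (gcons y g') = Rabs (x - y) + Dk k g g'.
Proof. reflexivity. Qed.

Lemma Dk_refl k g : Dk k g g = 0.
Proof. unfold Dk. rewrite (ssum_ext k _ (fun _ => 0)). apply ssum_zero. intros. rewrite Rminus_diag, Rabs_R0. auto. Qed.

Lemma nice_cons k F x : Nice (S k) F -> Nice k (fun g => F (gcons x g)).
Proof.
  intros [C [c [HC [Hc H]]]]. exists (C * exp (2 * c * Rabs x)), c. split.
  apply Rmult_le_pos; auto. apply Rlt_le, exp_pos. split; auto.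
  intros g g'. destruct (H (gcons x g) (gcons x g')) as [H1 H2].
  rewrite Sk_cons in H1. rewrite !Sk_cons, Dk_cons, Rminus_diag, Rabs_R0, Rplus_0_l in H2.
  pose proof (Sk_nonneg k g). pose proof (Sk_nonneg k g'). pose proof (Rabs_pos x).
  split.
  - eapply Rle_trans. apply H1. rewrite Rmult_assoc. apply Rmult_le_compat_l; auto.
    rewrite <- exp_plus. apply exp_le. nra.
  - eapply Rle_trans. apply H2. apply Rmult_le_compat_r. apply sqrt_pos.
    rewrite Rmult_assoc. apply Rmult_le_compat_l; auto. rewrite <- exp_plus. apply exp_le. nra.
Qed.

Lemma cont_from_bound (G : R -> R) (M : R -> R -> R) :
  (forall x y, Rabs (G y - G x) <= M x y * sqrt (Rabs (y - x))) ->
  (forall x, exists B, forall y, Rabs (y - x) < 1 -> 0 <= M x y <= B) ->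
  Cont G.
Proof.
  intros HG HM x. apply (proj1 (continuity_pt_filterlim G x)).
  destruct (HM x) as [B HB].
  intros eps He. set (B' := Rabs B + 1).
  assert (HB' : 0 < B') by (unfold B'; pose proof (Rabs_pos B); lra).
  exists (Rmin 1 ((eps / B') * (eps / B'))). split.
  { apply Rmin_pos. lra. assert (0 < eps / B') by (apply Rdiv_lt_0_compat; lra). nra. }
  intros y [_ Hy]. simpl in *. unfold R_dist in *.
  pose proof (Rmin_l 1 ((eps / B') * (eps / B'))). pose proof (Rmin_r 1 ((eps / B') * (eps / B'))).
  destruct (HB y) as [HB1 HB2]. lra.
  eapply Rle_lt_trans. apply HG.
  assert (Hs : sqrt (Rabs (y - x)) < eps / B').
  { assert (0 < eps / B') by (apply Rdiv_lt_0_compat; lra).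
    rewrite <- (sqrt_square (eps / B')) by lra. apply sqrt_lt_1_alt. split. apply Rabs_pos. lra. }
  pose proof (sqrt_pos (Rabs (y - x))).
  assert (B <= B') by (unfold B'; pose proof (Rle_abs B); lra).
  apply Rle_lt_trans with (B' * sqrt (Rabs (y - x))).
  apply Rmult_le_compat_r; lra.
  replace eps with (B' * (eps / B')) by (field; lra). apply Rmult_lt_compat_l; lra.
Qed.

Theorem nice_exists k : forall F, Nice k F -> exists l, gexp k F l.
Proof.
  induction k; intros F HN.
  - exists (F (fun _ => 0)). reflexivity.
  - assert (Hx : forall x, exists l, gexp k (fun g => F (gcons x g)) l).
    { intro x. apply IHk. apply nice_cons; auto. }
    set (G := fun x => proj1_sig (constructive_indefinite_description _ (Hx x))).
    assert (HG : forall x, gexp k (fun g => F (gcons x g)) (G x)).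
    { intro x. unfold G. destruct constructive_indefinite_description; auto. }
    destruct HN as [C [c [HC [Hc H]]]].
    assert (Bd : forall x, Rabs (G x) <= C * exp (c * Rabs x) * rho c ^ k).
    { intro x. eapply gexp_abs_bound. apply HG. apply (gexp_W k c Hc).
      intro g. destruct (H (gcons x g) (gcons x g)) as [H1 _]. rewrite Sk_cons in H1.
      eapply Rle_trans. apply H1. rewrite Rmult_assoc, <- exp_plus. right. f_equal. f_equal. ring. }
    assert (Lp : forall x y, Rabs (G y - G x) <= (C * exp (c * (Rabs x + Rabs y)) * rho (2 * c) ^ k) * sqrt (Rabs (y - x))).
    { intros x y. 
      assert (Hd := gexp_lin k _ _ _ _ (-1) (HG y) (HG x)).
      replace (G y + -1 * G x) with (G y - G x) in Hd by ring.
      apply Rle_trans with ((C * exp (c * (Rabs x + Rabs y)) * sqrt (Rabs (y - x))) * rho (2 * c) ^ k).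
      2: right; ring.
      eapply gexp_abs_bound. apply Hd. apply (gexp_W k (2 * c)). lra.
      intro g. destruct (H (gcons y g) (gcons x g)) as [_ H2].
      rewrite !Sk_cons, Dk_cons, Dk_refl, Rplus_0_r in H2.
      replace (F (gcons y g) + -1 * F (gcons x g)) with (F (gcons y g) - F (gcons x g)) by ring.
      eapply Rle_trans. apply H2. right.
      replace (c * (Rabs y + Sk k g + (Rabs x + Sk k g))) with (c * (Rabs x + Rabs y) + 2 * c * Sk k g) by ring.
      rewrite exp_plus. ring. }
    assert (CG : Cont G).
    { apply (cont_from_bound G (fun x y => C * exp (c * (Rabs x + Rabs y)) * rho (2 * c) ^ k)).
      - exact Lp.
      - intro x. exists (C * exp (c * (Rabs x + (Rabs x + 1))) * rho (2 * c) ^ k). intros y Hy.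
        pose proof (rho_pos (2 * c)). assert (0 <= rho (2 * c) ^ k) by (apply pow_le; lra).
        split. apply Rmult_le_pos; auto. apply Rmult_le_pos; auto. apply Rlt_le, exp_pos.
        apply Rmult_le_compat_r; auto. apply Rmult_le_compat_l; auto. apply exp_le.
        apply Rmult_le_compat_l; auto. 
        assert (Rabs y <= Rabs x + 1). { pose proof (Rabs_triang_inv y x). lra. } lra. }
    destruct (IR_exists_gauss G (C * rho c ^ k) c Hc CG) as [l Hl].
    { intro x. eapply Rle_trans. apply Bd. right; ring. }
    exists l. simpl. exists G. split; auto.
Qed.


Lemma nice_const k c : Nice k (fun _ => c).
Proof.
  exists (Rabs c), 0. split. apply Rabs_pos. split. lra. intros g g'. split.
  rewrite Rmult_0_l, exp_0. lra.
  rewrite Rminus_diag, Rabs_R0. apply Rmult_le_pos. apply Rmult_le_pos. apply Rabs_pos. apply Rlt_le, exp_pos. apply sqrt_pos.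
Qed.

Lemma exp_mono_c c c' s : c <= c' -> 0 <= s -> exp (c * s) <= exp (c' * s).
Proof. intros. apply exp_le. nra. Qed.

Lemma nice_plus k F F' : Nice k F -> Nice k F' -> Nice k (fun g => F g + F' g).
Proof.
  intros [C [c [HC [Hc H]]]] [C' [c' [HC' [Hc' H']]]].
  exists (C + C'), (c + c'). split. lra. split. lra. intros g g'.
  destruct (H g g') as [H1 H2]. destruct (H' g g') as [H1' H2'].
  pose proof (Sk_nonneg k g). pose proof (Sk_nonneg k g'). pose proof (sqrt_pos (Dk k g g')).
  pose proof (exp_mono_c c (c + c') (Sk k g) ltac:(lra) ltac:(lra)).
  pose proof (exp_mono_c c' (c + c') (Sk k g) ltac:(lra) ltac:(lra)).
  pose proof (exp_mono_c c (c + c') (Sk k g + Sk k g') ltac:(lra) ltac:(lra)).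
  pose proof (exp_mono_c c' (c + c') (Sk k g + Sk k g') ltac:(lra) ltac:(lra)).
  split.
  - eapply Rle_trans. apply Rabs_triang. nra.
  - replace (F g + F' g - (F g' + F' g')) with ((F g - F g') + (F' g - F' g')) by ring.
    eapply Rle_trans. apply Rabs_triang.
    assert (C * exp (c * (Sk k g + Sk k g')) * sqrt (Dk k g g') <= C * exp ((c + c') * (Sk k g + Sk k g')) * sqrt (Dk k g g')).
    { apply Rmult_le_compat_r; auto. apply Rmult_le_compat_l; auto. }
    assert (C' * exp (c' * (Sk k g + Sk k g')) * sqrt (Dk k g g') <= C' * exp ((c + c') * (Sk k g + Sk k g')) * sqrt (Dk k g g')).
    { apply Rmult_le_compat_r; auto. apply Rmult_le_compat_l; auto. }
    nra.
Qed.

Lemma nice_scal k F a : Nice k F -> Nice k (fun g => a * F g).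
Proof.
  intros [C [c [HC [Hc H]]]]. exists (Rabs a * C), c. split. apply Rmult_le_pos; auto. apply Rabs_pos.
  split; auto. intros g g'. destruct (H g g') as [H1 H2]. pose proof (Rabs_pos a). split.
  - rewrite Rabs_mult, Rmult_assoc. apply Rmult_le_compat_l; auto.
  - rewrite <- Rmult_minus_distr_l, Rabs_mult, !Rmult_assoc. apply Rmult_le_compat_l; auto. rewrite <- Rmult_assoc. auto.
Qed.

Lemma nice_mul k F F' : Nice k F -> Nice k F' -> Nice k (fun g => F g * F' g).
Proof.
  intros [C [c [HC [Hc H]]]] [C' [c' [HC' [Hc' H']]]].
  exists (2 * C * C'), (c + c'). split. nra. split. lra. intros g g'.
  destruct (H g g') as [H1 H2]. destruct (H' g g') as [H1' H2'].
  destruct (H' g' g) as [H1'' _].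
  pose proof (Sk_nonneg k g). pose proof (Sk_nonneg k g'). pose proof (sqrt_pos (Dk k g g')).
  pose proof (Rabs_pos (F g)). pose proof (Rabs_pos (F' g')).
  split.
  - rewrite Rabs_mult. apply Rle_trans with ((C * exp (c * Sk k g)) * (C' * exp (c' * Sk k g))).
    apply Rmult_le_compat; auto using Rabs_pos.
    replace (C * exp (c * Sk k g) * (C' * exp (c' * Sk k g))) with (C * C' * exp ((c + c') * Sk k g))
      by (rewrite Rmult_plus_distr_r, exp_plus; ring).
    pose proof (exp_pos ((c + c') * Sk k g)).
    assert (0 <= C * C' * exp ((c + c') * Sk k g)) by (apply Rmult_le_pos; [apply Rmult_le_pos; auto| lra]). lra.
  - replace (F g * F' g - F g' * F' g') with (F g * (F' g - F' g') + F' g' * (F g - F g')) by ring.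
    eapply Rle_trans. apply Rabs_triang. rewrite !Rabs_mult.
    set (E := exp ((c + c') * (Sk k g + Sk k g'))).
    assert (A1 : Rabs (F g) * Rabs (F' g - F' g') <= C * C' * E * sqrt (Dk k g g')).
    { eapply Rle_trans. apply Rmult_le_compat. apply Rabs_pos. apply Rabs_pos. apply H1. apply H2'.
      replace (C * exp (c * Sk k g) * (C' * exp (c' * (Sk k g + Sk k g')) * sqrt (Dk k g g'))) with
        (C * C' * sqrt (Dk k g g') * exp (c * Sk k g + c' * (Sk k g + Sk k g'))) by (rewrite exp_plus; ring).
      replace (C * C' * E * sqrt (Dk k g g')) with (C * C' * sqrt (Dk k g g') * E) by ring.
      apply Rmult_le_compat_l. apply Rmult_le_pos; auto. apply Rmult_le_pos; auto.
      unfold E. apply exp_le. nra. }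
    assert (A2 : Rabs (F' g') * Rabs (F g - F g') <= C * C' * E * sqrt (Dk k g g')).
    { eapply Rle_trans. apply Rmult_le_compat. apply Rabs_pos. apply Rabs_pos. apply H1''. apply H2.
      replace (C' * exp (c' * Sk k g') * (C * exp (c * (Sk k g + Sk k g')) * sqrt (Dk k g g'))) with
        (C * C' * sqrt (Dk k g g') * exp (c' * Sk k g' + c * (Sk k g + Sk k g'))) by (rewrite exp_plus; ring).
      replace (C * C' * E * sqrt (Dk k g g')) with (C * C' * sqrt (Dk k g g') * E) by ring.
      apply Rmult_le_compat_l. apply Rmult_le_pos; auto. apply Rmult_le_pos; auto.
      unfold E. apply exp_le. nra. }
    lra.
Qed.

Lemma nice_lsum {A : Type} k (F : A -> (nat -> R) -> R) (l : list A) :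
  (forall s, In s l -> Nice k (F s)) -> Nice k (fun g => lsum (fun s => F s g) l).
Proof.
  induction l; intros H; unfold lsum; simpl.
  - apply nice_const.
  - apply nice_plus. apply H; left; auto. apply IHl. intros; apply H; right; auto.
Qed.

Lemma Xrec_step i g j m : Xrec idmx i g (S j) m = if Nat.eqb m (i j) then g j else Xrec idmx i g j m.
Proof.
  simpl. unfold idmx. destruct (Nat.eqb m (i j)) eqn:E.
  - apply Nat.eqb_eq in E. subst. ring.
  - ring.
Qed.

Lemma Xrec_bound i g j m : Rabs (Xrec idmx i g j m) <= ssum j (fun t => Rabs (g t)).
Proof.
  induction j.
  - simpl. rewrite Rabs_R0. lra.
  - rewrite Xrec_step, ssum_last. pose proof (ssum_nonneg j (fun t => Rabs (g t)) (fun t => Rabs_pos _)).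
    pose proof (Rabs_pos (g j)). destruct (Nat.eqb m (i j)); lra.
Qed.

Lemma Xrec_diff i g g' j m : Rabs (Xrec idmx i g j m - Xrec idmx i g' j m) <= ssum j (fun t => Rabs (g t - g' t)).
Proof.
  induction j.
  - simpl. rewrite Rminus_diag, Rabs_R0. lra.
  - rewrite !Xrec_step, ssum_last. pose proof (ssum_nonneg j (fun t => Rabs (g t - g' t)) (fun t => Rabs_pos _)).
    pose proof (Rabs_pos (g j - g' j)). destruct (Nat.eqb m (i j)); lra.
Qed.

Lemma lsum_cons {A : Type} (f : A -> R) a l : lsum f (a :: l) = f a + lsum f l.
Proof. reflexivity. Qed.

Lemma lsum_nil {A : Type} (f : A -> R) : lsum f [] = 0.
Proof. reflexivity. Qed.

Lemma lsum_app {A : Type} (f : A -> R) l l' : lsum f (l ++ l') = lsum f l + lsum f l'.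
Proof. induction l; simpl. unfold lsum; simpl; ring. rewrite !lsum_cons, IHl. ring. Qed.

Lemma lsum_minus {A : Type} (f g : A -> R) l : lsum f l - lsum g l = lsum (fun a => f a - g a) l.
Proof. induction l. unfold lsum; simpl; ring. rewrite !lsum_cons, <- IHl. ring. Qed.

Lemma lsum_le_const {A : Type} (f : A -> R) l B : (forall a, In a l -> f a <= B) -> lsum f l <= INR (length l) * B.
Proof.
  induction l; intro H. unfold lsum; simpl; lra.
  rewrite lsum_cons. simpl length. rewrite S_INR.
  assert (f a <= B) by (apply H; left; auto). assert (lsum f l <= INR (length l) * B) by (apply IHl; intros; apply H; right; auto).
  lra.
Qed.

Lemma lsum_abs_le_const {A : Type} (f : A -> R) l B : (forall a, In a l -> Rabs (f a) <= B) -> Rabs (lsum f l) <= INR (length l) * B.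
Proof.
  induction l; intro H. unfold lsum; simpl; rewrite Rabs_R0; lra.
  rewrite lsum_cons. simpl length. rewrite S_INR.
  assert (Rabs (f a) <= B) by (apply H; left; auto).
  assert (Rabs (lsum f l) <= INR (length l) * B) by (apply IHl; intros; apply H; right; auto).
  eapply Rle_trans. apply Rabs_triang. lra.
Qed.

Lemma lsum_nonneg {A : Type} (f : A -> R) l : (forall a, 0 <= f a) -> 0 <= lsum f l.
Proof. induction l; intro H. unfold lsum; simpl; lra. rewrite lsum_cons. pose proof (H a). pose proof (IHl H). lra. Qed.

Lemma sqrt_diff u v : 0 <= u -> 0 <= v -> Rabs (sqrt u - sqrt v) <= sqrt (Rabs (u - v)).
Proof.
  intros Hu Hv.
  assert (K : forall p q, 0 <= q <= p -> sqrt p - sqrt q <= sqrt (p - q)).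
  { intros p q [Hq Hp].
    assert (sqrt p <= sqrt q + sqrt (p - q)).
    { apply Rsqr_incr_0_var. 2: { pose proof (sqrt_pos q); pose proof (sqrt_pos (p - q)); lra. }
      unfold Rsqr. rewrite sqrt_sqrt by lra.
      replace ((sqrt q + sqrt (p - q)) * (sqrt q + sqrt (p - q))) with
        (sqrt q * sqrt q + sqrt (p - q) * sqrt (p - q) + 2 * sqrt q * sqrt (p - q)) by ring.
      rewrite !sqrt_sqrt by lra. pose proof (sqrt_pos q); pose proof (sqrt_pos (p - q)). nra. }
    lra. }
  destruct (Rle_or_lt v u).
  - rewrite Rabs_right by (pose proof (sqrt_le_1_alt v u H); lra). rewrite (Rabs_right (u - v)) by lra. apply K; lra.
  - rewrite Rabs_left1 by (pose proof (sqrt_le_1_alt u v ltac:(lra)); lra). rewrite (Rabs_left1 (u - v)) by lra.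
    replace (- (sqrt u - sqrt v)) with (sqrt v - sqrt u) by ring. replace (- (u - v)) with (v - u) by ring. apply K; lra.
Qed.

Lemma one_plus_le_exp t : 1 + t <= exp t.
Proof. destruct (Req_dec t 0). subst; rewrite exp_0; lra. left; apply exp_ineq1; auto. Qed.

Lemma sqrt_le_exp t : 0 <= t -> sqrt t <= exp t.
Proof.
  intro Ht. eapply Rle_trans. 2: apply one_plus_le_exp.
  apply Rsqr_incr_0_var. unfold Rsqr. rewrite sqrt_sqrt by lra. nra. lra.
Qed.

Lemma seq_length' a b : length (seq a b) = b.
Proof. apply length_seq. Qed.

Lemma sq_abs z : z * z = Rabs z * Rabs z.
Proof. unfold Rabs; destruct (Rcase_abs z); ring. Qed.

Lemma nice_enormX d i j k : (j <= k)%nat -> Nice k (fun g => enorm d (Xrec idmx i g j)).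
Proof.
  intro Hjk. exists (sqrt (INR d)), 1. split. apply sqrt_pos. split. lra.
  intros g g'.
  set (x := Xrec idmx i g j). set (y := Xrec idmx i g' j).
  set (S := Sk k g). set (S' := Sk k g'). set (D := Dk k g g').
  assert (Hx : forall m, Rabs (x m) <= S).
  { intro m. eapply Rle_trans. apply Xrec_bound. apply ssum_mono_k; auto. intros; apply Rabs_pos. }
  assert (Hy : forall m, Rabs (y m) <= S').
  { intro m. eapply Rle_trans. apply Xrec_bound. apply ssum_mono_k; auto. intros; apply Rabs_pos. }
  assert (Hxy : forall m, Rabs (x m - y m) <= D).
  { intro m. eapply Rle_trans. apply Xrec_diff. apply ssum_mono_k; auto. intros; apply Rabs_pos. }
  pose proof (Sk_nonneg k g) as HS. pose proof (Sk_nonneg k g') as HS'. pose proof (Dk_nonneg k g g') as HD.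
  fold S S' D in HS, HS', HD.
  pose proof (pos_INR d) as Hd.
  unfold enorm.
  assert (N1 : forall z, 0 <= lsum (fun m => z m ^ 2) (seq 0 d)).
  { intro z. apply lsum_nonneg. intros; simpl; nra. }
  split.
  - rewrite Rabs_right by (apply Rle_ge, sqrt_pos).
    apply Rle_trans with (sqrt (INR d * (S * S))).
    + apply sqrt_le_1_alt. rewrite <- (seq_length' 0 d) at 2. apply lsum_le_const. intros m _.
      specialize (Hx m). simpl. rewrite Rmult_1_r, sq_abs. pose proof (Rabs_pos (x m)). nra.
    + rewrite sqrt_mult_alt by lra. rewrite sqrt_square by lra. rewrite Rmult_1_l.
      apply Rmult_le_compat_l. apply sqrt_pos. apply le_exp_self.
  - eapply Rle_trans. apply sqrt_diff; apply N1.
    rewrite lsum_minus.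
    apply Rle_trans with (sqrt (INR d * (D * (S + S')))).
    + apply sqrt_le_1_alt. rewrite <- (seq_length' 0 d) at 2. apply lsum_abs_le_const. intros m _.
      replace (x m ^ 2 - y m ^ 2) with ((x m - y m) * (x m + y m)) by ring.
      rewrite Rabs_mult. apply Rmult_le_compat; try apply Rabs_pos. apply Hxy.
      eapply Rle_trans. apply Rabs_triang. pose proof (Hx m); pose proof (Hy m); lra.
    + rewrite Rmult_1_l. rewrite !sqrt_mult_alt by nra.
      rewrite (Rmult_comm (sqrt D)), Rmult_assoc. apply Rmult_le_compat_l. apply sqrt_pos.
      apply Rmult_le_compat_r. apply sqrt_pos. apply sqrt_le_exp. lra.
Qed.

Lemma nice_ext k F F' : (forall g, F g = F' g) -> Nice k F -> Nice k F'.
Proof. intros E H. assert (F = F') by (apply functional_extensionality; auto). subst; auto. Qed.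

Lemma nice_F d n m : Nice n (sq_err_avg_idx idmx d n m).
Proof.
  unfold sq_err_avg_idx. apply nice_scal. apply nice_lsum. intros s _.
  set (A := fun g => lsum (fun j => enorm d (Xrec idmx (fun t => nth t s O) g j)) (seq 0 n) / INR n - m).
  apply (nice_ext n (fun g => A g * A g)). intro g. unfold A. ring.
  assert (NA : Nice n A).
  { apply (nice_ext n (fun g => / INR n * lsum (fun j => enorm d (Xrec idmx (fun t => nth t s O) g j)) (seq 0 n) + (- m))).
    intro g. unfold A. unfold Rdiv. ring.
    apply nice_plus. apply nice_scal. apply nice_lsum. intros j Hj. apply in_seq in Hj.
    apply nice_enormX. lia. apply nice_const. }
  apply nice_mul; auto.
Qed.


Definition Q (j : nat) (g : nat -> R) : R := lsum (fun t => g t ^ 2) (seq 0 j).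

Lemma lsum_map {A B : Type} (f : B -> R) (h : A -> B) l : lsum f (map h l) = lsum (fun a => f (h a)) l.
Proof. unfold lsum. rewrite map_map. reflexivity. Qed.

Lemma Q_cons j x g : Q (S j) (gcons x g) = x ^ 2 + Q j g.
Proof.
  unfold Q. simpl seq. rewrite lsum_cons. rewrite <- seq_shift, lsum_map. reflexivity.
Qed.

Lemma Q_last j g : Q (S j) g = Q j g + g j ^ 2.
Proof. unfold Q. rewrite seq_S, lsum_app. unfold lsum at 2. simpl. ring. Qed.

Lemma IR_poly2 c : is_RInt_R (fun x => gauss x * (x ^ 2 + c)) (1 + c).
Proof.
  pose proof (IR_lin _ _ _ _ c IR_gauss2 IR_gauss0) as H. replace (1 + c * 1) with (1 + c) in H by ring.
  eapply IR_ext. 2: exact H. intro; simpl; ring.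
Qed.

Lemma gexp_Q k : forall j, (j <= k)%nat -> gexp k (Q j) (INR j).
Proof.
  induction k; intros j Hj.
  - assert (j = O) by lia. subst. simpl. reflexivity.
  - destruct j as [|j].
    + eapply gexp_ext. 2: apply (gexp_const (S k) 0). intro g. reflexivity.
    + simpl. exists (fun x => x ^ 2 + INR j). split.
      * intro x. eapply gexp_ext. 2: eapply gexp_val. 3: apply (gexp_lin k (fun _ => x ^ 2) (Q j) (x ^ 2) (INR j) 1).
        intro g. simpl. rewrite Q_cons. ring. ring. apply gexp_const. apply IHk. lia.
      * eapply IR_val. 2: apply IR_poly2. destruct j; simpl; ring.
Qed.

Lemma IR_poly4 a b : is_RInt_R (fun x => gauss x * (x ^ 4 + a * x ^ 2 + b)) (3 + a + b).
Proof.
  pose proof (IR_lin _ _ _ _ a IR_gauss4 IR_gauss2) as H.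
  pose proof (IR_lin _ _ _ _ b H IR_gauss0) as H'.
  replace (3 + a * 1 + b * 1) with (3 + a + b) in H' by ring.
  eapply IR_ext. 2: exact H'. intro; simpl; ring.
Qed.

Lemma gexp_Q2 k : gexp k (fun g => Q k g * Q k g) (INR k * INR k + 2 * INR k).
Proof.
  induction k.
  - simpl. unfold Q; simpl. unfold lsum; simpl. ring.
  - simpl. exists (fun x => x ^ 4 + 2 * INR k * x ^ 2 + (INR k * INR k + 2 * INR k)). split.
    + intro x.
      pose proof (gexp_lin k (fun _ => x ^ 4) (Q k) (x ^ 4) (INR k) (2 * x ^ 2) (gexp_const k _) (gexp_Q k k (le_n k))) as H1.
      pose proof (gexp_lin k _ _ _ _ 1 H1 IHk) as H2.
      eapply gexp_ext. 2: eapply gexp_val. 3: exact H2.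
      intro g. simpl. rewrite Q_cons. ring. ring.
    + eapply IR_val. 2: apply IR_poly4. destruct k; simpl; ring.
Qed.

Lemma lsum_ext_in {A : Type} (f g : A -> R) l : (forall a, In a l -> f a = g a) -> lsum f l = lsum g l.
Proof.
  induction l; intro H. reflexivity. rewrite !lsum_cons. rewrite H by (left; auto). rewrite IHl. auto.
  intros; apply H; right; auto.
Qed.

Lemma sumsq_step (x : nat -> R) i y l : NoDup l ->
  lsum (fun m => (if Nat.eqb m i then y else x m) ^ 2) l <= lsum (fun m => x m ^ 2) l + y ^ 2.
Proof.
  induction l; intro Hnd.
  - unfold lsum; simpl. nra.
  - inversion Hnd; subst. rewrite !lsum_cons. destruct (Nat.eqb a i) eqn:E.
    + apply Nat.eqb_eq in E. subst.
      rewrite (lsum_ext_in _ (fun m => x m ^ 2) l).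
      simpl. nra.
      intros b Hb. destruct (Nat.eqb b i) eqn:E2; auto. apply Nat.eqb_eq in E2; subst; contradiction.
    + specialize (IHl H2). lra.
Qed.

Lemma Xsq_le d i g j : lsum (fun m => Xrec idmx i g j m ^ 2) (seq 0 d) <= Q j g.
Proof.
  induction j.
  - unfold Q. simpl. rewrite (lsum_ext_in _ (fun _ => 0)). 2: intros; simpl; ring.
    assert (forall l : list nat, lsum (fun _ => 0) l = 0). { induction l; auto. rewrite lsum_cons, IHl. ring. }
    rewrite H. unfold lsum; simpl. lra.
  - rewrite (lsum_ext_in _ (fun m => (if Nat.eqb m (i j) then g j else Xrec idmx i g j m) ^ 2)).
    2: intros; rewrite Xrec_step; auto.
    eapply Rle_trans. apply sumsq_step. apply seq_NoDup. rewrite Q_last. lra.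
Qed.

Lemma sqrt_am_gm t c : 0 <= t -> 0 < c -> sqrt t <= (t + c) / (2 * sqrt c).
Proof.
  intros Ht Hc. pose proof (sqrt_lt_R0 c Hc). pose proof (sqrt_pos t).
  apply Rmult_le_reg_r with (2 * sqrt c). lra. unfold Rdiv. rewrite Rmult_assoc, Rinv_l, Rmult_1_r by lra.
  assert (sqrt t * sqrt t = t) by (apply sqrt_sqrt; lra). assert (sqrt c * sqrt c = c) by (apply sqrt_sqrt; lra).
  pose proof (Rle_0_sqr (sqrt t - sqrt c)). unfold Rsqr in *. nra.
Qed.

Lemma enormX_le d i g j n : (0 < n)%nat ->
  enorm d (Xrec idmx i g j) <= (Q j g + INR n) / (2 * sqrt (INR n)).
Proof.
  intro Hn. unfold enorm. eapply Rle_trans. apply sqrt_le_1_alt. apply Xsq_le.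
  apply sqrt_am_gm. unfold Q; apply lsum_nonneg; intros; simpl; nra. apply lt_0_INR; auto.
Qed.

Lemma lsum_ge_const {A : Type} (f : A -> R) l B : (forall a, In a l -> B <= f a) -> INR (length l) * B <= lsum f l.
Proof.
  induction l; intro H. unfold lsum; simpl; lra.
  rewrite lsum_cons. simpl length. rewrite S_INR.
  assert (B <= f a) by (apply H; left; auto). assert (INR (length l) * B <= lsum f l) by (apply IHl; intros; apply H; right; auto).
  lra.
Qed.

Lemma length_all_seqs d n : length (all_seqs d n) = (d ^ n)%nat.
Proof.
  induction n. reflexivity. simpl all_seqs.
  assert (G : forall l : list nat, length (flat_map (fun a => map (cons a) (all_seqs d n)) l) = (length l * d ^ n)%nat).
  { induction l. reflexivity. simpl. rewrite length_app, length_map, IHl, IHn. lia. }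
  rewrite G, length_seq. simpl. lia.
Qed.

Lemma lsum_le {A : Type} (f g : A -> R) l : (forall a, In a l -> f a <= g a) -> lsum f l <= lsum g l.
Proof.
  induction l; intro H. unfold lsum; simpl; lra. rewrite !lsum_cons.
  assert (f a <= g a) by (apply H; left; auto). assert (lsum f l <= lsum g l) by (apply IHl; intros; apply H; right; auto). lra.
Qed.

Definition Psi (n : nat) (g : nat -> R) : R := / INR n * lsum (fun j => (Q j g + INR n) / (2 * sqrt (INR n))) (seq 0 n).

Lemma F_lower d n m g : (0 < d)%nat -> (0 < n)%nat -> 0 <= m ->
  m * m - 2 * m * Psi n g <= sq_err_avg_idx idmx d n m g.
Proof.
  intros Hd Hn Hm. unfold sq_err_avg_idx.
  assert (Hdn : 0 < INR d ^ n) by (apply pow_lt, lt_0_INR; auto).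
  apply Rle_trans with (/ INR d ^ n * (INR (length (all_seqs d n)) * (m * m - 2 * m * Psi n g))).
  - rewrite length_all_seqs, pow_INR. right. field. lra.
  - apply Rmult_le_compat_l. apply Rlt_le, Rinv_0_lt_compat; auto.
    apply lsum_ge_const. intros s _.
    set (A := lsum (fun j => enorm d (Xrec idmx (fun t => nth t s O) g j)) (seq 0 n) / INR n).
    assert (HA : A <= Psi n g).
    { unfold A, Psi. unfold Rdiv at 1. rewrite Rmult_comm. apply Rmult_le_compat_l.
      apply Rlt_le, Rinv_0_lt_compat, lt_0_INR; auto.
      apply lsum_le. intros j _. apply enormX_le; auto. }
    assert (HA0 : 0 <= A).
    { unfold A. apply Rdiv_le_0_compat. apply lsum_nonneg. intros; unfold enorm; apply sqrt_pos. apply lt_0_INR; auto. }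
    simpl. nra.
Qed.


Lemma gexp_lsum {A : Type} k (F : A -> (nat -> R) -> R) (v : A -> R) l :
  (forall a, In a l -> gexp k (F a) (v a)) -> gexp k (fun g => lsum (fun a => F a g) l) (lsum v l).
Proof.
  induction l; intro H.
  - eapply gexp_ext. 2: apply (gexp_const k 0). intro; reflexivity.
  - rewrite lsum_cons. eapply gexp_ext. 2: apply gexp_plus. intro g. rewrite lsum_cons. reflexivity.
    apply H; left; auto. apply IHl. intros; apply H; right; auto.
Qed.

Lemma lsum_INR_seq n : lsum INR (seq 0 n) = INR n * (INR n - 1) / 2.
Proof.
  induction n. unfold lsum; simpl; field.
  rewrite seq_S, lsum_app, IHn, S_INR. unfold lsum at 1. simpl map. simpl fold_right. field.
Qed.

Lemma lsum_affine (f : nat -> R) a b l : lsum (fun j => a * f j + b) l = a * lsum f l + b * INR (length l).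
Proof.
  induction l. unfold lsum; simpl; ring. rewrite !lsum_cons, IHl. simpl length. rewrite S_INR. ring.
Qed.

Lemma gexp_Psi n : (0 < n)%nat ->
  gexp n (Psi n) ((3 * INR n - 1) / (4 * sqrt (INR n))).
Proof.
  intro Hn. assert (Hn' : 0 < INR n) by (apply lt_0_INR; auto).
  assert (Hs : 0 < sqrt (INR n)) by (apply sqrt_lt_R0; auto).
  unfold Psi. eapply gexp_val. 2: apply gexp_scal.
  2: apply (gexp_lsum n (fun j g => (Q j g + INR n) / (2 * sqrt (INR n))) (fun j => (INR j + INR n) / (2 * sqrt (INR n)))).
  - rewrite (lsum_ext_in _ (fun j => (/ (2 * sqrt (INR n))) * INR j + INR n / (2 * sqrt (INR n)))).
    2: intros; field; lra.
    rewrite lsum_affine, lsum_INR_seq, length_seq. field. lra.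
  - intros j Hj. apply in_seq in Hj.
    eapply gexp_ext. 2: eapply gexp_val. 3: apply (gexp_lin n (fun _ => INR n / (2 * sqrt (INR n))) (Q j) (INR n / (2 * sqrt (INR n))) (INR j) (/ (2 * sqrt (INR n)))).
    intro g. simpl. field. lra. field. lra. apply gexp_const. apply gexp_Q. lia.
Qed.

Lemma m_lower d m : (0 < d)%nat -> gexp d (fun x => enorm d x) m -> (INR d - 1) / sqrt (INR d) <= m.
Proof.
  intros Hd Hm. assert (Hd' : 0 < INR d) by (apply lt_0_INR; auto).
  assert (Hq : 0 < sqrt (INR d)) by (apply sqrt_lt_R0; auto).
  assert (Hqq : sqrt (INR d) * sqrt (INR d) = INR d) by (apply sqrt_sqrt; lra).
  set (q := sqrt (INR d)) in *.
  set (a := 3 * INR d / (2 * INR d * q)). set (b := - / (2 * INR d * q)).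
  pose proof (gexp_lin d (fun g => a * Q d g) (fun g => Q d g * Q d g) _ _ b (gexp_scal _ _ _ a (gexp_Q d d (le_n d))) (gexp_Q2 d)) as H.
  eapply Rle_trans. 2: eapply gexp_mono. 3: exact H. 3: exact Hm.
  - right. unfold a, b. field. lra.
  - intro g. unfold enorm. fold (Q d g). 
    assert (HQ : 0 <= Q d g) by (unfold Q; apply lsum_nonneg; intros; simpl; nra).
    set (S := Q d g) in *. set (s := sqrt S).
    assert (Hs : s * s = S) by (apply sqrt_sqrt; auto). assert (Hs0 : 0 <= s) by apply sqrt_pos.
    unfold a, b. rewrite <- Hs. rewrite <- Hqq.
    apply Rmult_le_reg_r with (2 * (q * q) * q). nra.
    field_simplify. 2: lra.
    pose proof (Rle_0_sqr (s - q)) as X1. unfold Rsqr in X1. assert (X2 : 0 <= s * ((s - q) * (s - q))) by (apply Rmult_le_pos; lra). assert (X3 : 0 <= s * ((s - q) * (s - q)) * (s + 2 * q)) by (apply Rmult_le_pos; lra). assert (E : 2 * q ^ 3 * s - (3 * q ^ 2 * s ^ 2 - s ^ 4) = s * ((s - q) * (s - q)) * (s + 2 * q)) by ring. lra.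

Qed.


Theorem mainTheorem10 (d : nat) (hd4 : (4 <= d)%nat) (hdiv : Nat.modulo d 4 = 0%nat)
  (m : R) (hm : gexp d (fun x => enorm d x) m) :
  (exists l, gexp (d / 4) (sq_err_avg_idx idmx d (d / 4) m) l) /\
  (forall l, gexp (d / 4) (sq_err_avg_idx idmx d (d / 4) m) l ->
     l >= INR d / 25).
Proof.
  split.
  - apply nice_exists. apply nice_F.
  - intros l Hl.
    set (n := (d / 4)%nat) in *.
    assert (Hdn : d = (4 * n)%nat).
    { pose proof (Nat.div_mod_eq d 4). unfold n. lia. }
    assert (Hn : (0 < n)%nat) by lia.
    assert (Hd0 : (0 < d)%nat) by lia.
    assert (HnR : 1 <= INR n) by (apply (le_INR 1); lia).
    assert (HdR : INR d = 4 * INR n) by (rewrite Hdn, mult_INR; simpl; ring).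
    set (q := sqrt (INR n)).
    assert (Hq : 0 < q) by (apply sqrt_lt_R0; lra).
    assert (Hqq : q * q = INR n) by (apply sqrt_sqrt; lra).
    assert (Hsd : sqrt (INR d) = 2 * q).
    { rewrite HdR, sqrt_mult_alt by lra. replace 4 with (2 * 2) by ring. rewrite sqrt_square by lra. reflexivity. }
    pose proof (m_lower d m Hd0 hm) as Hm. rewrite Hsd, HdR in Hm.
    assert (Hqone : 1 <= q) by (unfold q; rewrite <- sqrt_1; apply sqrt_le_1_alt; lra).
    assert (M0 : 0 <= (4 * INR n - 1) / (2 * q)) by (apply Rdiv_le_0_compat; lra).
    assert (Hm0 : 0 <= m) by lra.
    pose proof (gexp_lin n (fun _ => m * m) (Psi n) (m * m) _ (-2 * m) (gexp_const n (m * m)) (gexp_Psi n Hn)) as HP.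
    assert (Hle := gexp_mono n (fun g => m * m + -2 * m * Psi n g) (sq_err_avg_idx idmx d n m) _ l (fun g => ltac:(pose proof (F_lower d n m g Hd0 Hn Hm0); lra)) HP Hl).
    fold q in Hle.
    set (E := (3 * INR n - 1) / (4 * q)) in *.
    set (u := m - 2 * E).
    assert (Hu : q / 2 <= u).
    { unfold u, E. rewrite <- Hqq in *. 
      apply Rle_trans with ((4 * (q * q) - 1) / (2 * q) - 2 * ((3 * (q * q) - 1) / (4 * q))).
      right. field. lra. lra. }
    assert (Hmu : (4 * INR n - 1) / (2 * q) * (q / 2) <= m * u).
    { apply Rmult_le_compat; lra. }
    replace ((4 * INR n - 1) / (2 * q) * (q / 2)) with ((4 * INR n - 1) / 4) in Hmu by (field; lra).
    assert (m * m + -2 * m * E = m * u) by (unfold u; ring).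
    rewrite HdR. lra.
Qed.
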